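(* Let $n_1,n_2,n_3,n_4,k_1,k_2$ be six pairwise distinct positive integers. Then the $4\times 4$ real matrix whose $i$-th row ($i=1,2,3,4$) is $$\Big(\frac{1}{n_i^2},\ \frac{1}{n_i},\ \frac{1}{n_i-k_1}+\frac{1}{n_i+k_1},\ \frac{1}{n_i-k_2}+\frac{1}{n_i+k_2}\Big)$$ is nonsingular (has full rank). *)

(* Defs.v *)
From HB Require Import structures.
From mathcomp Require Import all_boot all_order all_algebra.
Set Implicit Arguments. Unset Strict Implicit. Unset Printing Implicit Defensive.
Import Order.TTheory GRing.Theory Num.Theory.
Local Open Scope ring_scope.

Definition lemma3_row (R : realFieldType) (k1 k2 m : nat) : 'rV[R]_4 :=
  \row_(j < 4)
    match val j with
    | 0%N => (m%:R ^+ 2)^-1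
    | 1%N => (m%:R)^-1
    | 2%N => (m%:R - k1%:R)^-1 + (m%:R + k1%:R)^-1
    | _ => (m%:R - k2%:R)^-1 + (m%:R + k2%:R)^-1
    end.

Definition lemma3_mx (R : realFieldType) (n1 n2 n3 n4 k1 k2 : nat) : 'M[R]_4 :=
  \matrix_(i < 4)
    lemma3_row R k1 k2 (nth 0%N [:: n1; n2; n3; n4] i).

(* Main.v *)
Require Import Defs.
From HB Require Import structures.
From mathcomp Require Import all_boot all_order all_algebra.
From mathcomp Require Import ring lra.
Import Order.TTheory GRing.Theory Num.Theory.
Local Open Scope ring_scope.

Definition gM (R : comRingType) (a b : R) (xs : seq R) (i j : nat) : R :=
  let x := nth 0 xs i in
  match j with
  | 0%N => (x^+2 - a^+2) * (x^+2 - b^+2)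
  | 1%N => x * ((x^+2 - a^+2) * (x^+2 - b^+2))
  | 2%N => 2 * x^+3 * (x^+2 - b^+2)
  | _ => 2 * x^+3 * (x^+2 - a^+2)
  end.
Definition Kf (R : comRingType) (x1 x2 x3 x4 a b : R) : R :=
  let s1 := x1 + x2 + x3 + x4 in
  let s2 := x1*x2 + x1*x3 + x1*x4 + x2*x3 + x2*x4 + x3*x4 in
  let s3 := x1*x2*x3 + x1*x2*x4 + x1*x3*x4 + x2*x3*x4 in
  let s4 := x1*x2*x3*x4 in
  a^+2 * b^+2 * (s1*s2 - s3) + s1*s4*(a^+2 + b^+2) + s3*s4.
Arguments gM {R}. Arguments Kf {R}.

Lemma detM (R : comRingType) (x1 x2 x3 x4 a b : R) :
  \det (\matrix_(i < 4, j < 4) gM a b [:: x1; x2; x3; x4] i j) =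
  - 4 * a^+2 * b^+2 * (b^+2 - a^+2) *
  ((x2-x1)*(x3-x1)*(x4-x1)*(x3-x2)*(x4-x2)*(x4-x3)) * Kf x1 x2 x3 x4 a b.
Proof.
rewrite (expand_det_row _ ord0) !big_ord_recl big_ord0 /cofactor.
rewrite !(expand_det_row _ ord0) !big_ord_recl !big_ord0 /cofactor.
rewrite !(expand_det_row _ ord0) !big_ord_recl !big_ord0 /cofactor.
rewrite !(expand_det_row _ ord0) !big_ord_recl !big_ord0 /cofactor.
rewrite !det_mx00 !mxE /= /bump /= /gM /Kf /=.
rewrite ?expr0 ?expr1 ?expr2 ?exprS ?expr0.
ring.
Qed.

Ltac pos := repeat first [assumption | apply: addr_gt0 | apply: mulr_gt0 | apply: exprn_gt0].

Lemma Kpos (R : realDomainType) (x1 x2 x3 x4 a b : R) :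
  0 < x1 -> 0 < x2 -> 0 < x3 -> 0 < x4 -> 0 < a -> 0 < b ->
  0 < Kf x1 x2 x3 x4 a b.
Proof.
move=> h1 h2 h3 h4 ha hb.
have -> : Kf x1 x2 x3 x4 a b =
  a^+2 * b^+2 * (x1^+2*x2 + x1^+2*x3 + x1^+2*x4 + x2^+2*x1 + x2^+2*x3 + x2^+2*x4
     + x3^+2*x1 + x3^+2*x2 + x3^+2*x4 + x4^+2*x1 + x4^+2*x2 + x4^+2*x3
     + (x1*x2*x3 + x1*x2*x4 + x1*x3*x4 + x2*x3*x4)
     + (x1*x2*x3 + x1*x2*x4 + x1*x3*x4 + x2*x3*x4))
  + (x1 + x2 + x3 + x4) * (x1*x2*x3*x4) * (a^+2 + b^+2)
  + (x1*x2*x3 + x1*x2*x4 + x1*x3*x4 + x2*x3*x4) * (x1*x2*x3*x4).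
  by rewrite /Kf; ring.
pos.
Qed.

Theorem lemma3 (R : realFieldType) (n1 n2 n3 n4 k1 k2 : nat) :
  uniq [:: n1; n2; n3; n4; k1; k2] ->
  all (fun m => 0 < m)%N [:: n1; n2; n3; n4; k1; k2] ->
  \det (lemma3_mx R n1 n2 n3 n4 k1 k2) != 0.
Proof.
rewrite /= !inE !negb_or => /and5P[/and5P[d12 d13 d14 d1a d1b]
  /and4P[d23 d24 d2a d2b] /and3P[d34 d3a d3b] /andP[d4a d4b] /andP[dab _]].
move=> /and5P[p1 p2 p3 p4 /and3P[pa pb _]].
set x1 : R := n1%:R; set x2 : R := n2%:R; set x3 : R := n3%:R; set x4 : R := n4%:R.
set a : R := k1%:R; set b : R := k2%:R.
have gt0 : forall n, (0 < n)%N -> 0 < n%:R :> R by move=> n; rewrite ltr0n.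
have ne : forall m n, m != n -> m%:R - n%:R != 0 :> R.
  by move=> m n h; rewrite subr_eq0 eqr_nat.
have h1 := gt0 _ p1; have h2 := gt0 _ p2; have h3 := gt0 _ p3; have h4 := gt0 _ p4.
have ha := gt0 _ pa; have hb := gt0 _ pb.
have sq : forall x y : R, x - y != 0 -> 0 < x -> 0 < y -> x^+2 - y^+2 != 0.
  move=> x y hxy hx hy; have -> : x^+2 - y^+2 = (x - y) * (x + y) by ring.
  by rewrite mulf_neq0 // lt0r_neq0 // addr_gt0.
pose s (x : R) := (x^+2 * ((x^+2 - a^+2) * (x^+2 - b^+2)))^-1.
have snz : forall x : R, 0 < x -> x - a != 0 -> x - b != 0 -> s x != 0.
  move=> x hx hxa hxb.
  rewrite /s invr_eq0 !mulf_neq0 //;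
    first [by rewrite expf_neq0 // lt0r_neq0 | by rewrite sq | by rewrite lt0r_neq0].
have E : lemma3_mx R n1 n2 n3 n4 k1 k2 =
   diag_mx (\row_(i < 4) s (nth 0 [:: x1; x2; x3; x4] i)) *m
   \matrix_(i < 4, j < 4) gM a b [:: x1; x2; x3; x4] i j.
  apply/matrixP => i j; rewrite mul_diag_mx !mxE.
  case: i => [[|[|[|[|//]]]] ?]; case: j => [[|[|[|[|//]]]] ?] /=; rewrite /s /gM /=;
   field; rewrite ?sq ?ne ?lt0r_neq0 ?addr_gt0 //.
move: E => ->; rewrite det_mulmx det_diag detM.
rewrite mulf_neq0 //.
  rewrite !big_ord_recl big_ord0 !mxE /= mulr1.
  by rewrite !mulf_neq0 // snz // ne.
rewrite mulf_neq0 //; last by rewrite lt0r_neq0 // Kpos.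
rewrite !mulf_neq0 ?ne //; first [ by rewrite oppr_eq0 pnatr_eq0
  | by rewrite expf_neq0 // lt0r_neq0 | by rewrite sq // ne // eq_sym
  | by rewrite ne // eq_sym | by rewrite lt0r_neq0 | by rewrite eq_sym ].
Qed.
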